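(* Let $(A,\vdash_A,\dashv_A)$ be a vector space with multiplications satisfying (ND1), (ND2), (ND3) (a transformed pre-Leibniz algebra), and define $$x\succ_A y=x\vdash_A y+2\,y\dashv_A x,\qquad x\prec_A y=-y\dashv_A x-2\,x\vdash_A y,\quad\forall x,y\in A.$$ Then $(A,\succ_A,\prec_A)$ is an anti-pre-Leibniz algebra if and only if $(A,\vdash_A,\dashv_A)$ is a Novikov dialgebra. Moreover, in this case $(A,\succ_A,\prec_A)$ is an admissible Novikov dialgebra.
   Context: All vector spaces are over a field $\mathbb K$ of characteristic zero. Identities for multiplications $\vdash_A,\dashv_A$, for all $x,y,z$: (ND1) $x\vdash_A(y\vdash_A z)=(x\vdash_A y)\vdash_A z-(y\dashv_A x)\vdash_A z+y\vdash_A(x\vdash_A z)$; (ND2) $(y\vdash_A z)\dashv_A x=y\vdash_A(z\dashv_A x)-z\dashv_A(y\vdash_A x)+(z\dashv_A y)\dashv_A x$; (ND3) $z\dashv_A(x\vdash_A y)=z\dashv_A(x\dashv_A y)$; (ND4) $(z\dashv_A y)\dashv_A x=(z\dashv_A x)\dashv_A y$; (ND5) $(y\dashv_A x)\vdash_A z=(y\vdash_A z)\dashv_A x=(y\vdash_A x)\vdash_A z$. A Novikov dialgebra is $(A,\vdash_A,\dashv_A)$ satisfying (ND1)–(ND5). For multiplications $\succ_A,\prec_A$ set $x\circ_A y=x\succ_A y+x\prec_A y$. Identities: (AL1) $(x\circ_A y)\prec_A z=x\succ_A(y\circ_A z)-y\succ_A(x\circ_A z)$; (AL2) $(x\circ_A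 y)\succ_A z=y\succ_A(x\succ_A z)-x\succ_A(y\succ_A z)$; (AL3) $x\prec_A(y\circ_A z)=(y\succ_A x)\prec_A z-y\succ_A(x\prec_A z)$; (AL4) $(x\succ_A y)\prec_A z=-(y\prec_A x)\prec_A z$; (AN1) $(x\succ_A y)\succ_A z=-(y\prec_A x)\succ_A z$; (AN2) $x\prec_A(y\prec_A z)-y\prec_A(x\prec_A z)=2(x\prec_A y)\prec_A z-2(y\prec_A x)\prec_A z$; (AN3) $(x\succ_A y)\succ_A z+y\prec_A(x\succ_A z)=2x\succ_A(y\circ_A z)$. An anti-pre-Leibniz algebra satisfies (AL1)–(AL4); an admissible Novikov dialgebra satisfies (AL2)–(AL4) and (AN1)–(AN3). *)

(* Defs.v *)
From HB Require Import structures.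
From mathcomp Require Import all_boot all_order all_algebra.
Set Implicit Arguments. Unset Strict Implicit. Unset Printing Implicit Defensive.
Import GRing.Theory.
Local Open Scope ring_scope.

Section Identities.
Variables (K : fieldType) (V : lmodType K).

Definition bilinear_mul (m : V -> V -> V) : Prop :=
  (forall (a : K) x y z, m (a *: x + y) z = a *: m x z + m y z) /\
  (forall (a : K) x y z, m x (a *: y + z) = a *: m x y + m x z).

Section ND.
Variables (l r : V -> V -> V). (* l = |-_A , r = -|_A ; l x y = x |- y, r x y = x -| y *)
Definition ND1 := forall x y z,
  l x (l y z) = l (l x y) z - l (r y x) z + l y (l x z).
Definition ND2 := forall x y z,
  r (l y z) x = l y (r z x) - r z (l y x) + r (r z y) x.
Definition ND3 := forall x y z, r z (l x y) = r z (r x y).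
Definition ND4 := forall x y z, r (r z y) x = r (r z x) y.
Definition ND5 := forall x y z,
  l (r y x) z = r (l y z) x /\ r (l y z) x = l (l y x) z.

Definition transformed_pre_Leibniz := [/\ ND1, ND2 & ND3].
Definition Novikov_dialgebra := [/\ ND1, ND2, ND3, ND4 & ND5].
End ND.

Section AL.
Variables (s p : V -> V -> V). (* s = succ_A, p = prec_A *)
Let o x y := s x y + p x y.
Definition AL1 := forall x y z, p (o x y) z = s x (o y z) - s y (o x z).
Definition AL2 := forall x y z, s (o x y) z = s y (s x z) - s x (s y z).
Definition AL3 := forall x y z, p x (o y z) = p (s y x) z - s y (p x z).
Definition AL4 := forall x y z, p (s x y) z = - p (p y x) z.
Definition AN1 := forall x y z, s (s x y) z = - s (p y x) z.
Definition AN2 := forall x y z,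
  p x (p y z) - p y (p x z) = 2%:R *: p (p x y) z - 2%:R *: p (p y x) z.
Definition AN3 := forall x y z, s (s x y) z + p y (s x z) = 2%:R *: s x (o y z).

Definition anti_pre_Leibniz := [/\ AL1, AL2, AL3 & AL4].
Definition admissible_Novikov_dialgebra := [/\ AL2, AL3, AL4 & [/\ AN1, AN2 & AN3]].
End AL.

Definition succ_of (l r : V -> V -> V) : V -> V -> V :=
  fun x y => l x y + 2%:R *: r y x.
Definition prec_of (l r : V -> V -> V) : V -> V -> V :=
  fun x y => - r y x - 2%:R *: l x y.
End Identities.

(* Main.v *)
Require Import Defs.
From mathcomp Require Import all_boot all_order all_algebra.
Set Implicit Arguments. Unset Strict Implicit. Unset Printing Implicit Defensive.
Import GRing.Theory.
Local Open Scope ring_scope.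

Inductive lexpr := LAt of nat | LAdd of lexpr & lexpr | LOpp of lexpr | LZero | LMul of lexpr & nat.

Section R.
Variable V : zmodType.
Fixpoint leval (env : seq V) e : V := match e with
 | LAt i => nth 0 env i | LAdd a b => leval env a + leval env b
 | LOpp a => - leval env a | LZero => 0 | LMul a n => leval env a *+ n end.
Fixpoint lcoef e (i : nat) : int := match e with
 | LAt j => (i == j)%:Z | LAdd a b => lcoef a i + lcoef b i
 | LOpp a => - lcoef a i | LZero => 0 | LMul a n => lcoef a i * n%:Z end.
Lemma leval_coef env e : leval env e = \sum_(i < size env) env`_i *~ lcoef e i.
Proof.
elim: e => [j|a iha b ihb|a iha||a iha n] /=.
- case: (ltnP j (size env)) => hj.
    rewrite (bigD1 (Ordinal hj)) //= eqxx mulr1z big1 ?addr0 //.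
    by move=> i /negbTE; rewrite -val_eqE /= => ->; rewrite mulr0z.
  rewrite nth_default // big1 // => i _; case: eqP => [e|]; last by rewrite mulr0z.
  by move: (ltn_ord i); rewrite e ltnNge hj.
- by rewrite iha ihb -big_split /=; apply: eq_bigr => i _; rewrite mulrzDr.
- by rewrite iha -sumrN; apply: eq_bigr => i _; rewrite mulrNz.
- by rewrite big1 // => i _; rewrite mulr0z.
- rewrite iha -sumrMnl; apply: eq_bigr => i _.
  by rewrite mulrzA.
Qed.
Lemma lcheck env e : all (fun i => lcoef e i == 0) (iota 0 (size env)) -> leval env e = 0.
Proof.
move=> /allP h; rewrite leval_coef big1 // => i _.
by rewrite (eqP (h i _)) ?mulr0z // mem_iota /=.
Qed.
End R.

Ltac lmem x env := match env with
 | nil => constr:(false) | cons x _ => constr:(true) | cons _ ?t => lmem x t end.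
Ltac lcollect t env := match t with
 | ?a + ?b => let e := lcollect a env in lcollect b e
 | - ?a => lcollect a env
 | 0 => env
 | ?a *+ _ => lcollect a env
 | _ => match lmem t env with true => env | false => constr:(cons t env) end end.
Ltac lidx x env := match env with
 | cons x _ => constr:(0%N) | cons _ ?t => let n := lidx x t in constr:(S n) end.
Ltac lreify t env := match t with
 | ?a + ?b => let ea := lreify a env in let eb := lreify b env in constr:(LAdd ea eb)
 | - ?a => let ea := lreify a env in constr:(LOpp ea)
 | 0 => constr:(LZero)
 | ?a *+ ?n => let ea := lreify a env in constr:(LMul ea n)
 | _ => let i := lidx t env in constr:(LAt i) end.
Ltac linz := match goal with |- ?t = 0 =>
  let T := type of t in
  let env := lcollect t (@nil T) in
  let e := lreify t env in
  apply: (@lcheck _ env e); vm_compute; reflexivity end.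

Section Lin.
Variables (K : fieldType) (V : lmodType K) (m : V -> V -> V) (hm : bilinear_mul m).
Lemma linD1 x y z : m (x + y) z = m x z + m y z.
Proof. by have := hm.1 1 x y z; rewrite !scale1r. Qed.
Lemma linD2 x y z : m z (x + y) = m z x + m z y.
Proof. by have := hm.2 1 z x y; rewrite !scale1r. Qed.
Lemma lin01 z : m 0 z = 0.
Proof. have := hm.1 1 0 0 z; rewrite !scale1r addr0 => h. by apply: (addrI (m 0 z)); rewrite addr0 -h. Qed.
Lemma lin02 z : m z 0 = 0.
Proof. have := hm.2 1 z 0 0; rewrite !scale1r addr0 => h. by apply: (addrI (m z 0)); rewrite addr0 -h. Qed.
Lemma linZ1 a x z : m (a *: x) z = a *: m x z.
Proof. by have := hm.1 a x 0 z; rewrite !addr0 lin01 addr0. Qed.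
Lemma linZ2 a x z : m z (a *: x) = a *: m z x.
Proof. by have := hm.2 a z x 0; rewrite !addr0 lin02 addr0. Qed.
Lemma linN1 x z : m (- x) z = - m x z.
Proof. by rewrite -scaleN1r linZ1 scaleN1r. Qed.
Lemma linN2 x z : m z (- x) = - m z x.
Proof. by rewrite -scaleN1r linZ2 scaleN1r. Qed.
Lemma linMn1 n x z : m (x *+ n) z = m x z *+ n.
Proof. by rewrite -!scaler_nat linZ1. Qed.
Lemma linMn2 n x z : m z (x *+ n) = m z x *+ n.
Proof. by rewrite -!scaler_nat linZ2. Qed.
End Lin.

Lemma stepP (V : zmodType) (X u v : V) (k : nat) : u = v -> X - (u - v) *+ k = 0 -> X = 0.
Proof. by move=> ->; rewrite subrr mul0rn subr0. Qed.
Lemma stepN (V : zmodType) (X u v : V) (k : nat) : u = v -> X + (u - v) *+ k = 0 -> X = 0.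
Proof. by move=> ->; rewrite subrr mul0rn addr0. Qed.
Lemma torsion (K : fieldType) (hK : [pchar K] =i pred0) (V : lmodType K) (a b : V) (d : nat) :
  (0 < d)%N -> (a - b) *+ d = 0 -> a = b.
Proof.
move=> hd; rewrite -scaler_nat => /eqP; rewrite scaler_eq0.
have /GRing.pcharf0P -> := hK. case: d hd => // d _ /=. by rewrite subr_eq0 => /eqP.
Qed.

Ltac expand hl hr := cbv beta zeta delta [succ_of prec_of];
  rewrite ?(linD1 hl, linD2 hl, linN1 hl, linN2 hl, linZ1 hl, linZ2 hl, linMn1 hl, linMn2 hl,
            linD1 hr, linD2 hr, linN1 hr, linN2 hr, linZ1 hr, linZ2 hr, linMn1 hr, linMn2 hr, scaler_nat).

Theorem proposition3p5 (K : fieldType) (hK : [pchar K] =i pred0)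
  (V : lmodType K) (l r : V -> V -> V)
  (hl : bilinear_mul l) (hr : bilinear_mul r)
  (hT : transformed_pre_Leibniz l r) :
  (anti_pre_Leibniz (succ_of l r) (prec_of l r) <-> Novikov_dialgebra l r) /\
  (Novikov_dialgebra l r ->
     admissible_Novikov_dialgebra (succ_of l r) (prec_of l r)).
Proof.
case: hT => h1 h2 h3.
split; [split|].
- case=> a1 a2 a3 a4; split => //.
  + cbv beta zeta delta [ND4] => x y z.
    apply: (torsion hK (d:=6)) => //.
    apply: (stepN (k:=1) (h1 x y z)).
    apply: (stepN (k:=2) (h2 x y z)).
    apply: (stepP (k:=2) (h2 y x z)).
    apply: (stepP (k:=2) (h3 y x z)).
    apply: (stepP (k:=1) (a2 x y z)).
    by expand hl hr; linz.
  + move=> x y z; split.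
    * apply: (torsion hK (d:=6)) => //.
      apply: (stepP (k:=2) (h1 x y z)).
      apply: (stepN (k:=2) (h2 x y z)).
      apply: (stepN (k:=1) (h2 y x z)).
      apply: (stepP (k:=2) (h3 y x z)).
      apply: (stepP (k:=1) (a3 y x z)).
      by expand hl hr; linz.
    * apply: (torsion hK (d:=6)) => //.
      apply: (stepP (k:=3) (h1 x y z)).
      apply: (stepP (k:=4) (h1 y x z)).
      apply: (stepP (k:=1) (h2 x y z)).
      apply: (stepP (k:=2) (h2 y x z)).
      apply: (stepN (k:=2) (h3 x y z)).
      apply: (stepP (k:=2) (a1 x y z)).
      apply: (stepP (k:=1) (a2 x y z)).
      apply: (stepN (k:=1) (a3 x y z)).
      by expand hl hr; linz.
- case=> _ _ _ h4 h5; split.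
  + cbv beta zeta delta [AL1] => x y z.
    apply: (torsion hK (d:=1)) => //.
    apply: (stepN (k:=2) (h1 x y z)).
    apply: (stepN (k:=3) (h1 y x z)).
    apply: (stepN (k:=1) (h2 x y z)).
    apply: (stepP (k:=1) (h2 y x z)).
    apply: (stepP (k:=1) (h3 y x z)).
    apply: (stepN (k:=3) (h4 x y z)).
    apply: (stepP (k:=3) ((h5 y x z).1)).
    apply: (stepP (k:=3) ((h5 x y z).2)).
    by expand hl hr; linz.
  + cbv beta zeta delta [AL2] => x y z.
    apply: (torsion hK (d:=1)) => //.
    apply: (stepP (k:=1) (h1 x y z)).
    apply: (stepP (k:=2) (h2 x y z)).
    apply: (stepN (k:=2) (h2 y x z)).
    apply: (stepN (k:=2) (h3 y x z)).
    apply: (stepP (k:=6) (h4 x y z)).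
    by expand hl hr; linz.
  + cbv beta zeta delta [AL3] => x y z.
    apply: (torsion hK (d:=1)) => //.
    apply: (stepN (k:=2) (h1 y x z)).
    apply: (stepP (k:=1) (h2 x y z)).
    apply: (stepP (k:=2) (h2 y x z)).
    apply: (stepN (k:=2) (h3 x y z)).
    apply: (stepP (k:=6) ((h5 y x z).1)).
    by expand hl hr; linz.
  + cbv beta zeta delta [AL4] => x y z.
    apply: (torsion hK (d:=1)) => //.
    apply: (stepP (k:=2) (h1 x y z)).
    apply: (stepP (k:=2) (h1 y x z)).
    apply: (stepN (k:=1) (h3 x y z)).
    apply: (stepP (k:=2) (h3 y x z)).
    apply: (stepN (k:=6) ((h5 x y z).1)).
    apply: (stepN (k:=6) ((h5 x y z).2)).
    by expand hl hr; linz.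
- case=> _ _ _ h4 h5; split; [| | |split].
  + cbv beta zeta delta [AL2] => x y z.
    apply: (torsion hK (d:=1)) => //.
    apply: (stepP (k:=1) (h1 x y z)).
    apply: (stepP (k:=2) (h2 x y z)).
    apply: (stepN (k:=2) (h2 y x z)).
    apply: (stepN (k:=2) (h3 y x z)).
    apply: (stepP (k:=6) (h4 x y z)).
    by expand hl hr; linz.
  + cbv beta zeta delta [AL3] => x y z.
    apply: (torsion hK (d:=1)) => //.
    apply: (stepN (k:=2) (h1 y x z)).
    apply: (stepP (k:=1) (h2 x y z)).
    apply: (stepP (k:=2) (h2 y x z)).
    apply: (stepN (k:=2) (h3 x y z)).
    apply: (stepP (k:=6) ((h5 y x z).1)).
    by expand hl hr; linz.
  + cbv beta zeta delta [AL4] => x y z.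
    apply: (torsion hK (d:=1)) => //.
    apply: (stepP (k:=2) (h1 x y z)).
    apply: (stepP (k:=2) (h1 y x z)).
    apply: (stepN (k:=1) (h3 x y z)).
    apply: (stepP (k:=2) (h3 y x z)).
    apply: (stepN (k:=6) ((h5 x y z).1)).
    apply: (stepN (k:=6) ((h5 x y z).2)).
    by expand hl hr; linz.
  + cbv beta zeta delta [AN1] => x y z.
    apply: (torsion hK (d:=1)) => //.
    apply: (stepN (k:=1) (h1 x y z)).
    apply: (stepN (k:=1) (h1 y x z)).
    apply: (stepP (k:=2) (h3 x y z)).
    apply: (stepN (k:=4) (h3 y x z)).
    apply: (stepP (k:=3) ((h5 x y z).1)).
    apply: (stepP (k:=3) ((h5 x y z).2)).
    by expand hl hr; linz.
  + cbv beta zeta delta [AN2] => x y z.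
    apply: (torsion hK (d:=1)) => //.
    apply: (stepP (k:=8) (h1 x y z)).
    apply: (stepP (k:=4) (h1 y x z)).
    apply: (stepP (k:=2) (h2 x y z)).
    apply: (stepN (k:=2) (h2 y x z)).
    apply: (stepN (k:=2) (h3 x y z)).
    apply: (stepP (k:=2) (h3 y x z)).
    apply: (stepP (k:=3) (h4 x y z)).
    apply: (stepN (k:=12) ((h5 x y z).1)).
    apply: (stepN (k:=12) ((h5 x y z).2)).
    by expand hl hr; linz.
  + cbv beta zeta delta [AN3] => x y z.
    apply: (torsion hK (d:=1)) => //.
    apply: (stepN (k:=1) (h1 x y z)).
    apply: (stepN (k:=3) (h1 y x z)).
    apply: (stepP (k:=4) (h2 x y z)).
    apply: (stepP (k:=2) (h2 y x z)).
    apply: (stepN (k:=4) (h3 y x z)).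
    apply: (stepP (k:=3) ((h5 x y z).1)).
    apply: (stepP (k:=3) ((h5 y x z).1)).
    apply: (stepP (k:=3) ((h5 x y z).2)).
    by expand hl hr; linz.

Qed.
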